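(* For any American option $\xi$ and any mixed stopping time $\chi\in\mathcal{X}$, \[ \{-x\in\mathbb{R}^d:\exists y\in\Phi,\ (y,\chi)\in\Phi^{\mathrm{bg}}(\xi),\ x=y_0\}=\{-x\in\mathbb{R}^d:\exists z\in\Psi^{\mathrm{a}}(-\xi_\chi),\ x=z_0\}. \]
   Context: Finite filtered probability space $(\Omega,\mathcal{F},\mathbb{P};(\mathcal{F}_t)_{t=0}^T)$, $\mathcal{F}_0$ trivial, $\mathcal{F}_T=2^\Omega$, $\mathbb{P}(\{\omega\})>0$. $\mathcal{L}_t$: $\mathcal{F}_t$-measurable $\mathbb{R}^d$-valued random variables. $d$ assets, $\mathcal{F}_t$-measurable exchange rates $\pi^{jk}_t>0$, $\pi^{jj}_t=1$. Solvency cone $\mathcal{K}_t$: $x\in\mathcal{L}_t$ with $x(\omega)$ in the convex cone generated by $e^1,\ldots,e^d$ and $\pi^{jk}_t(\omega)e^j-e^k$ for all $\omega$. Trading strategies $\Phi$: $y=(y_t)_{t=0}^{T+1}$, $y_0\in\mathbb{R}^d$, $y_t\in\mathcal{L}_{t-1}$ ($t=1,\ldots,T$), $y_{T+1}=0$. Mixed stopping times $\mathcal{X}$: adapted $[0,1]$-valued $\chi$ with $\sum_{t=0}^T\chi_t=1$; $\xi_\chi=\sum_{t=0}^T\chi_t\xi_t\in\mathcal{L}_T$. American option: adapted $\mathbb{R}^d$-valued $\xi=(\xi_t)_{t=0}^T$. $\Phi^{\mathrm{bg}}(\xi)$: pairs $(y,\chi)\in\Phi\times\mathcal{X}$ with $y_t+\chi_t\xi_t-y_{t+1}\in\mathcal{K}_t$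 for each $t=0,\ldots,T$. For $\zeta\in\mathcal{L}_T$, $\Psi^{\mathrm{a}}(\zeta)$ is the set of $y\in\Phi$ with $y_t-y_{t+1}\in\mathcal{K}_t$ for $t=0,\ldots,T-1$ and $y_T-\zeta\in\mathcal{K}_T$. Standing assumption: no arbitrage (no $y\in\Phi$ with $y_0=0$, $y_t-y_{t+1}\in\mathcal{K}_t$ for $t<T$ and $y_T-x\in\mathcal{K}_T$ for a nonzero componentwise non-negative $x\in\mathcal{L}_T$). *)

(* Defs.v *)
From HB Require Import structures.
From mathcomp Require Import all_boot all_order all_algebra.
From mathcomp Require Export boolp classical_sets reals.
Set Implicit Arguments.
Unset Strict Implicit.
Unset Printing Implicit Defensive.
Import Order.TTheory GRing.Theory Num.Theory.
Local Open Scope ring_scope.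

Section Market.
Context {R : realType} {Omega : finType} {d : nat}.

Definition is_sigma_algebra (A : {set {set Omega}}) : Prop :=
  [/\ [set: Omega]%SET \in A,
      (forall B, B \in A -> ~: B \in A) &
      (forall B C, B \in A -> C \in A -> B :|: C \in A)].

(* Measurability of a map with values in an eqType (on a finite space this is
   the same as: every level set is an event). *)
Definition meas {X : eqType} (A : {set {set Omega}}) (f : Omega -> X) : Prop :=
  forall c : X, [set w | f w == c]%SET \in A.

Definition is_filtration (T : nat) (F : nat -> {set {set Omega}}) : Prop :=
  [/\ (forall t, (t <= T)%N -> is_sigma_algebra (F t)),
      (forall s t, (s <= t)%N -> (t <= T)%N -> F s \subset F t),
      F 0%N = [set finset.set0; [set: Omega]]%SET &
      F T = powerset [set: Omega]%SET].

Definition is_positive_prob (P : Omega -> R) : Prop :=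
  (forall w, 0 < P w) /\ \sum_w P w = 1.

Definition is_exchange_rates (T : nat) (F : nat -> {set {set Omega}})
  (pi : nat -> Omega -> 'I_d -> 'I_d -> R) : Prop :=
  forall t, (t <= T)%N ->
    [/\ forall w j k, 0 < pi t w j k,
        forall w j, pi t w j j = 1 &
        forall j k, meas (F t) (fun w => pi t w j k)].

Definition solv_cone (p : 'I_d -> 'I_d -> R) (x : 'rV[R]_d) : Prop :=
  exists (a : 'I_d -> R) (b : 'I_d -> 'I_d -> R),
    [/\ forall j, 0 <= a j,
        forall j k, 0 <= b j k &
        x = \sum_j a j *: delta_mx 0 j
            + \sum_j \sum_k b j k *: (p j k *: delta_mx 0 j - delta_mx 0 k)].

Definition inK (F : nat -> {set {set Omega}})
  (pi : nat -> Omega -> 'I_d -> 'I_d -> R) (t : nat) (x : Omega -> 'rV[R]_d) : Prop :=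
  meas (F t) x /\ forall w, solv_cone (pi t w) (x w).

Definition is_strategy (T : nat) (F : nat -> {set {set Omega}})
  (y : nat -> Omega -> 'rV[R]_d) : Prop :=
  [/\ exists c, forall w, y 0%N w = c,
      forall t, (1 <= t)%N -> (t <= T)%N -> meas (F t.-1) (y t) &
      forall w, y T.+1 w = 0].

Definition is_mixed_stopping (T : nat) (F : nat -> {set {set Omega}})
  (chi : nat -> Omega -> R) : Prop :=
  [/\ forall t, (t <= T)%N -> meas (F t) (chi t),
      forall t w, (t <= T)%N -> 0 <= chi t w <= 1 &
      forall w, \sum_(t < T.+1) chi t w = 1].

Definition is_american_option (T : nat) (F : nat -> {set {set Omega}})
  (xi : nat -> Omega -> 'rV[R]_d) : Prop :=
  forall t, (t <= T)%N -> meas (F t) (xi t).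

Definition stopped_payoff (T : nat) (chi : nat -> Omega -> R)
  (xi : nat -> Omega -> 'rV[R]_d) : Omega -> 'rV[R]_d :=
  fun w => \sum_(t < T.+1) chi t w *: xi t w.

Definition in_Phi_bg (T : nat) (F : nat -> {set {set Omega}})
  (pi : nat -> Omega -> 'I_d -> 'I_d -> R) (xi : nat -> Omega -> 'rV[R]_d)
  (y : nat -> Omega -> 'rV[R]_d) (chi : nat -> Omega -> R) : Prop :=
  [/\ is_strategy T F y, is_mixed_stopping T F chi &
      forall t, (t <= T)%N ->
        inK F pi t (fun w => y t w + chi t w *: xi t w - y t.+1 w)].

Definition in_Psi_a (T : nat) (F : nat -> {set {set Omega}})
  (pi : nat -> Omega -> 'I_d -> 'I_d -> R) (zeta : Omega -> 'rV[R]_d)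
  (y : nat -> Omega -> 'rV[R]_d) : Prop :=
  [/\ is_strategy T F y,
      forall t, (t < T)%N -> inK F pi t (fun w => y t w - y t.+1 w) &
      inK F pi T (fun w => y T w - zeta w)].

Definition no_arbitrage (T : nat) (F : nat -> {set {set Omega}})
  (pi : nat -> Omega -> 'I_d -> 'I_d -> R) : Prop :=
  ~ exists (y : nat -> Omega -> 'rV[R]_d) (x : Omega -> 'rV[R]_d),
      [/\ is_strategy T F y,
          forall w, y 0%N w = 0,
          forall t, (t < T)%N -> inK F pi t (fun w => y t w - y t.+1 w),
          meas (F T) x /\ (exists w, x w != 0) /\ (forall w i, 0 <= x w 0 i) &
          inK F pi T (fun w => y T w - x w)].

End Market.

(* Main.v *)
Require Import Defs.
From HB Require Import structures.
From mathcomp Require Import all_boot all_order all_algebra.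
From mathcomp Require Import boolp classical_sets reals.
Import GRing.Theory Num.Theory.
Local Open Scope ring_scope.
Local Open Scope classical_set_scope.

Lemma lin1 (V : zmodType) (a b c s : V) : a + b - c = (a - s) - (c - (s + b)).
Proof. by rewrite opprB addrA subrKA. Qed.
Lemma lin2 (V : zmodType) (a b s : V) : a + b - 0 = (a - s) - - (s + b).
Proof. by rewrite opprK subr0 subrKA. Qed.
Lemma lin3 (V : zmodType) (a b c s : V) : a - c = (a + s) + b - (c + (s + b)).
Proof. by rewrite -(addrA a) (addrC c) addrKA. Qed.
Lemma lin4 (V : zmodType) (a b s : V) : a - - (s + b) = (a + s) + b - 0.
Proof. by rewrite opprK subr0 addrA. Qed.

Section Helpers.
Context {Omega : finType}.

Lemma sig_set0 (A : {set {set Omega}}) : is_sigma_algebra A -> finset.set0 \in A.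
Proof. move=> [hT hC _]; have := hC _ hT; by rewrite finset.setCT. Qed.

Lemma sig_I (A : {set {set Omega}}) B C : is_sigma_algebra A ->
  B \in A -> C \in A -> (B :&: C)%SET \in A.
Proof.
move=> [hT hCo hU] hB hC'.
have -> : (B :&: C = ~: (~: B :|: ~: C))%SET by rewrite finset.setCU !finset.setCK.
by apply: (hCo); apply: hU; apply: (hCo).
Qed.

Lemma sig_big (A : {set {set Omega}}) (I : finType) (P : pred I) (B : I -> {set Omega}) :
  is_sigma_algebra A -> (forall i, P i -> B i \in A) -> (\bigcup_(i | P i) B i)%SET \in A.
Proof.
move=> hA hB; apply: (big_ind (fun X => X \in A)).
- exact: sig_set0.
- by case: hA => _ _ hU; apply: hU.
- exact: hB.
Qed.

Lemma meas2 {X1 X2 Y : eqType} (A : {set {set Omega}}) (f1 : Omega -> X1)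
  (f2 : Omega -> X2) (h : X1 -> X2 -> Y) : is_sigma_algebra A ->
  meas A f1 -> meas A f2 -> meas A (fun w => h (f1 w) (f2 w)).
Proof.
move=> hA h1 h2 c.
have -> : [set w | h (f1 w) (f2 w) == c]%SET = (\bigcup_(w0 | h (f1 w0) (f2 w0) == c)
   ([set w | f1 w == f1 w0] :&: [set w | f2 w == f2 w0]))%SET.
  apply/finset.setP => w; rewrite inE; apply/idP/bigcupP.
  - by move=> hw; exists w => //; rewrite !inE !eqxx.
  - by case=> w0 hw0; rewrite !inE => /andP[/eqP -> /eqP ->].
by apply: sig_big => // w0 _; apply: sig_I.
Qed.

Lemma meas_cst {X : eqType} (A : {set {set Omega}}) (c0 : X) :
  is_sigma_algebra A -> meas A (fun _ => c0).
Proof.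
move=> hA c; case E: (c0 == c).
- have -> : [set _ : Omega | true]%SET = [set: Omega]%SET by apply/finset.setP => w; rewrite !inE.
  by case: hA.
- have -> : [set _ : Omega | false]%SET = finset.set0 by apply/finset.setP => w; rewrite !inE.
  exact: sig_set0.
Qed.

Lemma meas_ext {X : eqType} (A : {set {set Omega}}) (f g : Omega -> X) :
  (forall w, f w = g w) -> meas A f -> meas A g.
Proof. by move=> e; have -> : g = f by apply: funext => w; rewrite e. Qed.

Lemma meas_mono {X : eqType} (A B : {set {set Omega}}) (f : Omega -> X) :
  A \subset B -> meas A f -> meas B f.
Proof. by move=> s h c; apply: (fintype.subsetP s); apply: h. Qed.

Lemma meas_sum {R : realType} {d : nat} (A : {set {set Omega}}) n
  (g : nat -> Omega -> 'rV[R]_d) : is_sigma_algebra A ->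
  (forall s, (s < n)%N -> meas A (g s)) -> meas A (fun w => \sum_(s < n) g s w).
Proof.
move=> hA; elim: n => [|n IH] hg.
- apply: (meas_ext _ (fun _ => 0)); first by move=> w; rewrite big_ord0.
  exact: meas_cst.
- apply: (meas_ext _ (fun w => \sum_(s < n) g s w + g n w)).
    by move=> w; rewrite big_ord_recr.
  apply: (meas2 _ _ _ (fun a b => a + b)) => //.
    by apply: IH => s hs; apply: hg; apply: ltnW.
  exact: hg.
Qed.

Lemma inK_ext (R : realType) (d : nat) (F : nat -> {set {set Omega}}) (pi : nat -> Omega -> 'I_d -> 'I_d -> R) (t : nat)
  (f g : Omega -> 'rV[R]_d) : inK F pi t f -> (forall w, f w = g w) -> inK F pi t g.
Proof. by move=> h e; have -> : g = f by apply: funext => w; rewrite e. Qed.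

End Helpers.
Arguments inK_ext {Omega R d F pi t f g}.

Theorem proposition5p5 (R : realType) (Omega : finType) (d T : nat)
  (F : nat -> {set {set Omega}}) (P : Omega -> R)
  (pi : nat -> Omega -> 'I_d -> 'I_d -> R)
  (hF : is_filtration T F) (hP : is_positive_prob P)
  (hpi : is_exchange_rates T F pi) (hNA : no_arbitrage T F pi)
  (xi : nat -> Omega -> 'rV[R]_d) (hxi : is_american_option T F xi)
  (chi : nat -> Omega -> R) (hchi : is_mixed_stopping T F chi) :
  [set v : 'rV[R]_d | exists x : 'rV[R]_d, v = - x /\
     exists y, in_Phi_bg T F pi xi y chi /\ forall w, y 0%N w = x]
  =
  [set v : 'rV[R]_d | exists x : 'rV[R]_d, v = - x /\
     exists z, in_Psi_a T F pi (fun w => - stopped_payoff T chi xi w) z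
               /\ forall w, z 0%N w = x].
Proof.
pose S t w := \sum_(s < t) chi s w *: xi s w.
have SS t w : S t.+1 w = S t w + chi t w *: xi t w by rewrite /S big_ord_recr.
have S0 w : S 0%N w = 0 by rewrite /S big_ord0.
case: hF => hsig hmono _ _.
case: (hchi) => hchim _ _.
have Smeas t : (1 <= t)%N -> (t <= T)%N -> meas (F t.-1) (S t).
  move=> h1 hT; apply: (meas_sum (F t.-1) t (fun s w => chi s w *: xi s w)); first by apply: hsig; apply: leq_trans (leq_pred t) hT.
  move=> s hs; apply: (meas_mono (F s)).
    by apply: hmono; [rewrite -ltnS prednK | apply: leq_trans (leq_pred t) hT].
  apply: (meas2 _ _ _ (fun a b => a *: b)).
  - by apply: hsig; apply: leq_trans hT; apply: ltnW.
  - by apply: hchim; apply: leq_trans hT; apply: ltnW.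
  - by apply: hxi; apply: leq_trans hT; apply: ltnW.
have hsigp t : (1 <= t)%N -> (t <= T)%N -> is_sigma_algebra (F t.-1).
  by move=> _ hT; apply: hsig; apply: leq_trans (leq_pred t) hT.
apply/seteqP; split => v [x [-> [y [Hy Hy0]]]]; exists x; split => //.
- case: Hy => [[[c hc] hym hyT] _ hK].
  exists (fun t w => if (t <= T)%N then y t w - S t w else 0); split; last first.
    by move=> w; rewrite /= S0 subr0 Hy0.
  split; first split.
  + by exists c => w /=; rewrite S0 subr0 hc.
  + move=> t h1 hT; rewrite hT.
    apply: (meas2 _ _ _ (fun a b => a - b)); [exact: hsigp | exact: hym | exact: Smeas].
  + by move=> w; rewrite ltnn.
  + move=> t ht; apply: (inK_ext (hK t (ltnW ht))) => w.
    by rewrite /= ltnW // ht SS -lin1.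
  + apply: (inK_ext (hK T (leqnn T))) => w.
    by rewrite /= leqnn hyT (_ : stopped_payoff T chi xi w = S T.+1 w) // SS -lin2.
- case: Hy => [[[c hc] hym hyT] hK hKT].
  exists (fun t w => if (t <= T)%N then y t w + S t w else 0); split; last first.
    by move=> w; rewrite /= S0 addr0 Hy0.
  split.
  + split.
    * by exists c => w /=; rewrite S0 addr0 hc.
    * move=> t h1 hT; rewrite hT.
      apply: (meas2 _ _ _ (fun a b => a + b)); [exact: hsigp | exact: hym | exact: Smeas].
    * by move=> w; rewrite ltnn.
  + exact: hchi.
  + move=> t htT; have [ht|Et] : (t < T)%N \/ t = T by move: htT; rewrite leq_eqVlt => /orP[/eqP|]; auto.
    * apply: (inK_ext (hK t ht)) => w.
      by rewrite /= ltnW // ht SS; exact: lin3.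
    * rewrite Et; apply: (inK_ext (hKT)) => w.
      by rewrite /= leqnn ltnn (_ : stopped_payoff T chi xi w = S T.+1 w) // SS; exact: lin4.
Qed.
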